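(* Consider the network system $\mathbf{\Sigma}$ and, for a given clustering matrix $\Pi\in\mathbb{R}^{n\times r}$, the reduced network system $\hat{\mathbf{\Sigma}}$ (both described in the context). If the scalars $\alpha,\beta$ satisfy $\alpha\beta=\mathbf{tr}(\hat{E})/\mathbf{tr}(E)$, then the error system $\mathbf{\Sigma_e}=\mathbf{\Sigma}-\hat{\mathbf{\Sigma}}$ is BIBO stable for all $\hat{W}\in\mathbb{D}_{++}^{|\hat{\mathcal{E}}|}$ and all $\hat{E}\in\mathbb{D}_{++}^{r}$.
   Context: $\mathbb{D}_{++}^k$ denotes the set of $k\times k$ diagonal matrices with positive diagonal entries; $\mathbf{1}_k$ is the all-ones vector of length $k$. Let $\mathcal{G}$ be a simple, undirected, connected graph with node set $\{1,\dots,n\}$ and $|\mathcal{E}|$ edges, each edge labeled and given an arbitrary orientation. Its incidence matrix $D\in\mathbb{R}^{n\times|\mathcal{E}|}$ has $[D]_{il}=+1$ if edge $l$ is directed from node $i$, $-1$ if edge $l$ is directed towards node $i$, and $0$ otherwise. Let $W\in\mathbb{D}_{++}^{|\mathcal{E}|}$ (edge weights), $E\in\mathbb{D}_{++}^{n}$ (nodal time-scales), $L=DWD^T$, $F\in\mathbb{R}^{n\times p}$, $H\in\mathbb{R}^{q\times n}$. The network system $\mathbf{\Sigma}$ is $E\dot{x}=-Lx+Fu$, $y=Hx$, with transfer function $\mathbf{\Sigma}(s)=H(sI_n+E^{-1}L)^{-1}E^{-1}F$. A clustering is a partition of $\{1,\dots,n\}$ into $r$ nonempty disjoint clusters $\mathcal{C}_1,\dots,\mathcal{C}_r$,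 with characteristic matrix $\Pi\in\mathbb{R}^{n\times r}$, $[\Pi]_{ij}=1$ if $i\in\mathcal{C}_j$ and $0$ otherwise. The reduced incidence matrix $\hat{D}\in\mathbb{R}^{r\times|\hat{\mathcal{E}}|}$ is obtained from $\Pi^TD$ by removing all zero columns and all duplicate columns. For $\hat{W}\in\mathbb{D}_{++}^{|\hat{\mathcal{E}}|}$, $\hat{E}\in\mathbb{D}_{++}^{r}$ and scalars $\alpha,\beta$, set $\hat{L}=\hat{D}\hat{W}\hat{D}^T$, $\hat{F}=\Pi^TF$, $\hat{H}=H\Pi$; the reduced system $\hat{\mathbf{\Sigma}}$ is $\hat{E}\dot{\hat{x}}=-\hat{L}\hat{x}+\beta\hat{F}u$, $\hat{y}=\alpha\hat{H}\hat{x}$, with transfer function $\hat{\mathbf{\Sigma}}(s)=\alpha\hat{H}(sI_r+\hat{E}^{-1}\hat{L})^{-1}\beta\hat{E}^{-1}\hat{F}$. The error system $\mathbf{\Sigma_e}$ has transfer function $\mathbf{\Sigma}(s)-\hat{\mathbf{\Sigma}}(s)$ (realized by the block-diagonal state matrix $\mathrm{diag}(-E^{-1}L,-\hat{E}^{-1}\hat{L})$, input matrix $[E^{-1}F;\beta\hat{E}^{-1}\hat{F}]$ and output matrix $[H,\,-\alpha\hat{H}]$). BIBO stable means all poles of the transfer function have negative real part. *)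

(* Defs.v *)
From HB Require Import structures.
From mathcomp Require Import all_boot all_order all_algebra.
From mathcomp Require Import reals.
From mathcomp.real_closed Require Import complex.
Set Implicit Arguments. Unset Strict Implicit. Unset Printing Implicit Defensive.
Import Order.TTheory GRing.Theory Num.Theory.
Local Open Scope ring_scope.
Local Open Scope complex_scope.

Section Defs.
Variable R : realType.
Local Notation C := R[i].

(* A graph on nodes 'I_n with m labeled, oriented edges: edge l goes from
   (e l).1 to (e l).2. *)
Definition incidence (n m : nat) (e : 'I_m -> 'I_n * 'I_n) : 'M[R]_(n, m) :=
  \matrix_(i < n, l < m)
     (if i == (e l).1 then 1 else if i == (e l).2 then -1 else 0).

Definition simple_graph (n m : nat) (e : 'I_m -> 'I_n * 'I_n) : Prop :=
  (forall l, (e l).1 != (e l).2) /\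
  (forall l l', (e l = e l' \/ e l = ((e l').2, (e l').1)) -> l = l').

Definition adj (n m : nat) (e : 'I_m -> 'I_n * 'I_n) : rel 'I_n :=
  fun i j => [exists l, (e l == (i, j)) || (e l == (j, i))].

Definition connected_graph (n m : nat) (e : 'I_m -> 'I_n * 'I_n) : Prop :=
  forall i j : 'I_n, connect (adj e) i j.

Definition posdiag (k : nat) (A : 'M[R]_k) : Prop :=
  (forall i j, i != j -> A i j = 0) /\ (forall i, 0 < A i i).

(* a clustering into r nonempty clusters: node i lies in cluster c i *)
Definition clustering (n r : nat) (c : 'I_n -> 'I_r) : Prop :=
  forall j : 'I_r, exists i : 'I_n, c i = j.

Definition char_mx (n r : nat) (c : 'I_n -> 'I_r) : 'M[R]_(n, r) :=
  \matrix_(i < n, j < r) (c i == j)%:R.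

Definition red_cols (n r m : nat) (Pi : 'M[R]_(n, r)) (D : 'M[R]_(n, m))
  : seq 'cV[R]_r :=
  undup [seq col l (Pi^T *m D) | l <- enum 'I_m & col l (Pi^T *m D) != 0].

Definition red_incidence (n r m : nat) (Pi : 'M[R]_(n, r)) (D : 'M[R]_(n, m))
  : 'M[R]_(r, size (red_cols Pi D)) :=
  \matrix_(i < r, k < size (red_cols Pi D)) (nth 0 (red_cols Pi D) k) i ord0.

Definition cmx (a b : nat) (A : 'M[R]_(a, b)) : 'M[C]_(a, b) :=
  map_mx (fun x => x%:C) A.

(* transfer function of xdot = A x + B u, y = Cm x :  Cm (sI - A)^{-1} B,
   defined on the points s where sI - A is invertible *)
Definition tf (k p q : nat) (A : 'M[R]_k) (B : 'M[R]_(k, p)) (Cm : 'M[R]_(q, k))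
  (s : C) : 'M[C]_(q, p) :=
  cmx Cm *m invmx (s%:M - cmx A) *m cmx B.

Definition tf_dom (k : nat) (A : 'M[R]_k) (s : C) : bool :=
  (s%:M - cmx A) \in unitmx.

(* A matrix-valued rational function G, given on a (cofinite) domain dom, is
   regular at s0 if every entry coincides on dom with a fraction a/b of
   polynomials whose denominator does not vanish at s0; a pole is a point
   where G is not regular. *)
Definition regular_at (p q : nat) (dom : C -> bool) (G : C -> 'M[C]_(q, p))
  (s0 : C) : Prop :=
  forall (i : 'I_q) (j : 'I_p), exists a b : {poly C},
    b.[s0] != 0 /\ forall s, dom s -> G s i j * b.[s] = a.[s].

Definition is_pole (p q : nat) (dom : C -> bool) (G : C -> 'M[C]_(q, p))
  (s0 : C) : Prop := ~ regular_at dom G s0.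

Definition BIBO_stable (p q : nat) (dom : C -> bool) (G : C -> 'M[C]_(q, p))
  : Prop := forall s0, is_pole dom G s0 -> Re s0 < 0.

Definition Sigma_tf (n m p q : nat) (D : 'M[R]_(n, m)) (W : 'M[R]_m)
  (E : 'M[R]_n) (F : 'M[R]_(n, p)) (H : 'M[R]_(q, n)) : C -> 'M[C]_(q, p) :=
  tf (- (invmx E *m (D *m W *m D^T))) (invmx E *m F) H.

Definition Sigma_dom (n m : nat) (D : 'M[R]_(n, m)) (W : 'M[R]_m)
  (E : 'M[R]_n) : C -> bool :=
  tf_dom (- (invmx E *m (D *m W *m D^T))).

(* reduced system: hat E xhat' = - hat L xhat + beta hat F u, yhat = alpha hat H xhat,
   with hat L = hat D hat W hat D^T, hat F = Pi^T F, hat H = H Pi *)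
Definition Sigma_hat_tf (n r mh p q : nat) (Pi : 'M[R]_(n, r))
  (Dh : 'M[R]_(r, mh)) (Wh : 'M[R]_mh) (Eh : 'M[R]_r)
  (F : 'M[R]_(n, p)) (H : 'M[R]_(q, n)) (alpha beta : R) : C -> 'M[C]_(q, p) :=
  tf (- (invmx Eh *m (Dh *m Wh *m Dh^T))) (beta *: (invmx Eh *m (Pi^T *m F)))
     (alpha *: (H *m Pi)).

Definition Sigma_hat_dom (r mh : nat) (Dh : 'M[R]_(r, mh)) (Wh : 'M[R]_mh)
  (Eh : 'M[R]_r) : C -> bool :=
  tf_dom (- (invmx Eh *m (Dh *m Wh *m Dh^T))).

End Defs.

(* Main.v *)
Require Import Defs.
From HB Require Import structures.
From mathcomp Require Import all_boot all_order all_algebra.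
From mathcomp Require Import reals.
From mathcomp.real_closed Require Import complex.
From mathcomp Require Import lra ring.
Import Order.TTheory GRing.Theory Num.Theory.
Local Open Scope ring_scope.
Local Open Scope complex_scope.
Set Implicit Arguments. Unset Strict Implicit. Unset Printing Implicit Defensive.

Section S.
Variable R : realType.
Local Notation C := R[i].
Local Notation rc := (real_complex R).

Lemma cmxE m n (A : 'M[R]_(m,n)) : cmx A = map_mx rc A. Proof. by []. Qed.
Lemma cmxM m n p (A : 'M[R]_(m,n)) (B : 'M[R]_(n,p)) : cmx (A *m B) = cmx A *m cmx B.
Proof. by rewrite !cmxE map_mxM. Qed.
Lemma cmxD m n (A B : 'M[R]_(m,n)) : cmx (A + B) = cmx A + cmx B.
Proof. by rewrite !cmxE map_mxD. Qed.
Lemma cmxN m n (A : 'M[R]_(m,n)) : cmx (- A) = - cmx A.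
Proof. by rewrite !cmxE map_mxN. Qed.
Lemma cmxZ m n a (A : 'M[R]_(m,n)) : cmx (a *: A) = a%:C *: cmx A.
Proof. by rewrite !cmxE map_mxZ. Qed.
Lemma cmx0 m n : cmx (0 : 'M[R]_(m,n)) = 0.
Proof. by rewrite !cmxE map_mx0. Qed.
Lemma cmx1 k : cmx (1%:M : 'M[R]_k) = 1%:M.
Proof. by rewrite !cmxE map_mx1. Qed.
Lemma cmxT m n (A : 'M[R]_(m,n)) : cmx (A^T) = (cmx A)^T.
Proof. by rewrite !cmxE map_trmx. Qed.
Lemma cmxV k (A : 'M[R]_k) : cmx (invmx A) = invmx (cmx A).
Proof. by rewrite !cmxE map_invmx. Qed.
Lemma cmx_entry m n (A : 'M[R]_(m,n)) i j : cmx A i j = (A i j)%:C.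
Proof. by rewrite mxE. Qed.

Definition onec k : 'cV[R]_k := const_mx 1.
Definition oner k : 'rV[R]_k := const_mx 1.

Lemma onecT k : (onec k)^T = oner k.
Proof. by apply/matrixP=> i j; rewrite !mxE. Qed.
Lemma onerT k : (oner k)^T = onec k.
Proof. by apply/matrixP=> i j; rewrite !mxE. Qed.

Lemma posdiag_diag k (A : 'M[R]_k) : posdiag A -> A = diag_mx (\row_i A i i).
Proof.
move=> [H0 _]; apply/matrixP=> i j; rewrite !mxE.
by case: eqVneq => [->|/H0 ->] //; rewrite mulr1n.
Qed.

Lemma posdiag_unit k (A : 'M[R]_k) : posdiag A -> A \in unitmx.
Proof.
move=> HA; rewrite unitmxE (posdiag_diag HA) det_diag unitfE.
rewrite gt_eqF // prodr_gt0 // => i _; rewrite mxE; exact: (proj2 HA).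
Qed.

Lemma posdiag_tr k (A : 'M[R]_k) : (0 < k)%N -> posdiag A -> 0 < \tr A.
Proof.
case: k A => // k A _ HA; rewrite /mxtrace (bigD1 ord0) //=.
rewrite ltr_pwDl ?(proj2 HA) // sumr_ge0 // => i _; exact/ltW/(proj2 HA).
Qed.

Lemma oner_diag k (A : 'M[R]_k) : posdiag A -> oner k *m A = \row_j A j j.
Proof.
move=> HA; apply/matrixP=> i j; rewrite !mxE (bigD1 j) //= big1 ?addr0.
  by rewrite mxE mul1r.
by move=> l /(proj1 HA) ->; rewrite mulr0.
Qed.

Lemma oner_diag_onec k (A : 'M[R]_k) : posdiag A -> oner k *m A *m onec k = (\tr A)%:M.
Proof.
move=> HA; rewrite oner_diag //; apply/matrixP=> i j; rewrite !mxE !ord1 /= mulr1n.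
by apply: eq_bigr => l _; rewrite !mxE mulr1.
Qed.

Lemma quadform t (X : 'M[R]_t) (z : 'rV[C]_t) : posdiag X ->
  (z *m cmx X *m (map_mx conjc z)^T) 0 0 = \sum_i (X i i)%:C * (z 0 i * (z 0 i)^*).
Proof.
move=> HX; rewrite mxE; apply: eq_bigr => j _.
rewrite !mxE (bigD1 j) //= big1 ?addr0; last first.
  by move=> l /(proj1 HX) H; rewrite !mxE H mulr0.
by rewrite mxE [z 0 j * _]mulrC mulrA.
Qed.

Lemma quad_ge0 t (X : 'M[R]_t) (z : 'rV[C]_t) : posdiag X ->
  0 <= \sum_i (X i i)%:C * (z 0 i * (z 0 i)^*).
Proof.
move=> HX; apply: sumr_ge0 => i _; apply: mulr_ge0; last exact: mulcJ_ge0.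
by rewrite ler0c; apply/ltW/(proj2 HX).
Qed.

Lemma quad_eq0 t (X : 'M[R]_t) (z : 'rV[C]_t) : posdiag X ->
  \sum_i (X i i)%:C * (z 0 i * (z 0 i)^*) = 0 -> z = 0.
Proof.
move=> HX /psumr_eq0P H.
have {}H : forall l, (X l l)%:C * (z 0 l * (z 0 l)^* ) = 0.
  move=> l; apply: H => // l' _; apply: mulr_ge0; last exact: mulcJ_ge0.
  by rewrite ler0c; apply/ltW/(proj2 HX).
apply/matrixP=> i j; rewrite ord1 mxE.
have := H j; apply: contra_eq => nz.
apply: mulf_neq0; first by rewrite fmorph_eq0 gt_eqF // (proj2 HX).
by rewrite mulf_neq0 // conjc_eq0.
Qed.

Lemma C_lemma (s a b : C) : 0 <= complex.Re s -> 0 <= a -> 0 <= b -> s * a + b = 0 -> b = 0.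
Proof.
case: s => s1 s2; case: a => a1 a2; case: b => b1 b2 /=.
rewrite !lecE /= => hs /andP[/eqP -> ha] /andP[/eqP -> hb] [e1 e2].
have : 0 <= s1 * a1 by apply: mulr_ge0.
move=> h; have -> : b1 = 0 by lra.
by [].
Qed.

Lemma ReC (s : C) : 'Re s = (complex.Re s)%:C.
Proof.
pose ic : C := Complex 0 1.
have hic : ic ^+ 2 = -1 by rewrite /ic expr2; simpc.
have hs : s = (complex.Re s)%:C + ic * (complex.Im s)%:C.
  by rewrite /ic; case: s => a b; simpc.
have hi : 'i = ic \/ 'i = - ic.
  have : ('i - ic) * ('i + ic) = 0 :> C.
    by rewrite -subr_sqr sqrCi subrr.
  by move/eqP; rewrite mulf_eq0 subr_eq0 addr_eq0 => /orP[/eqP|/eqP]; [left|right].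
have r1 : (complex.Re s)%:C \is Num.real by rewrite complex_real.
have r2 : (complex.Im s)%:C \is Num.real by rewrite complex_real.
case: hi => hi.
  by rewrite {1}hs -hi Re_rect.
rewrite {1}hs -[ic]opprK -hi mulNr -mulrN -rmorphN Re_rect //.
by rewrite complex_real.
Qed.

Section Gen.
Variables (k mm : nat) (Dg : 'M[R]_(k, mm)) (Wg : 'M[R]_mm) (Eg : 'M[R]_k).
Hypothesis HW : posdiag Wg.
Hypothesis HE : posdiag Eg.
Hypothesis Hk : (0 < k)%N.
Hypothesis Hsum : oner k *m Dg = 0.

Definition Lg := Dg *m Wg *m Dg^T.
Definition Ag := invmx Eg *m Lg.
Definition Pg := (\tr Eg)^-1 *: (onec k *m (oner k *m Eg)).
Definition Mg := Ag + Pg.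

Lemma trE_neq0 : \tr Eg != 0.
Proof. by rewrite gt_eqF // posdiag_tr. Qed.

Lemma DT1 : Dg^T *m onec k = 0.
Proof. by rewrite -onerT -trmx_mul Hsum trmx0. Qed.

Lemma Lg_onec : Lg *m onec k = 0.
Proof.
by rewrite /Lg -mulmxA -onerT -trmx_mul Hsum trmx0 mulmx0.
Qed.

Lemma oner_Lg : oner k *m Lg = 0.
Proof. by rewrite /Lg !mulmxA Hsum !mul0mx. Qed.

Lemma AP : Ag *m Pg = 0.
Proof.
by rewrite /Pg /Ag /Lg -scalemxAr !mulmxA -(mulmxA _ (Dg^T)) DT1 mulmx0 !mul0mx scaler0.
Qed.

Lemma PA : Pg *m Ag = 0.
Proof.
rewrite /Pg /Ag -scalemxAl -!mulmxA (mulmxA Eg) mulmxV ?posdiag_unit // mul1mx.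
by rewrite oner_Lg mulmx0 scaler0.
Qed.

Lemma P_onec : Pg *m onec k = onec k.
Proof.
rewrite /Pg -scalemxAl -!mulmxA (mulmxA _ Eg) oner_diag_onec // mul_mx_scalar.
by rewrite scalerA mulVf ?trE_neq0 // scale1r.
Qed.

Lemma PP : Pg *m Pg = Pg.
Proof.
by rewrite {2}/Pg scalemxAr mulmxA P_onec -scalemxAr.
Qed.

Lemma PEinv : Pg *m invmx Eg = (\tr Eg)^-1 *: (onec k *m oner k).
Proof.
by rewrite /Pg -scalemxAl -!mulmxA mulmxV ?posdiag_unit // mulmx1.
Qed.

Lemma MP : Mg *m Pg = Pg.
Proof. by rewrite /Mg mulmxDl AP PP add0r. Qed.
Lemma PM : Pg *m Mg = Pg.
Proof. by rewrite /Mg mulmxDr PA PP add0r. Qed.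

Lemma M_onec : Mg *m onec k = onec k.
Proof. by rewrite /Mg mulmxDl P_onec /Ag -mulmxA Lg_onec mulmx0 add0r. Qed.

Lemma conj_cmx m n (X : 'M[R]_(m,n)) : map_mx conjc (cmx X) = cmx X.
Proof. by apply/matrixP=> i j; rewrite !mxE conjc_real. Qed.

Lemma const_cmx : (const_mx 1 : 'rV[C]_k) = cmx (oner k).
Proof. by apply/matrixP=> i j; rewrite !mxE. Qed.

Hypothesis Hker : forall y : 'rV[C]_k, y *m cmx Dg = 0 -> exists z : C, y = z *: const_mx 1.

Lemma N_unit (s0 : C) : 0 <= complex.Re s0 -> (s0%:M + cmx Mg) \in unitmx.
Proof.
move=> hs0; rewrite unitmxE unitfE; apply/negP => /det0P [v vNZ vN].
have EU : invmx Eg *m Eg = 1%:M by rewrite mulVmx ?posdiag_unit.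
have h1 : v *m cmx (onec k) = 0.
  have : v *m (s0%:M + cmx Mg) *m cmx (onec k) = 0 by rewrite vN mul0mx.
  rewrite -mulmxA mulmxDl mul_scalar_mx -cmxM M_onec -[X in _ + X]scale1r -scalerDl.
  rewrite -scalemxAr => /eqP; rewrite scaler_eq0 => /orP[|/eqP //].
  case: s0 hs0 {vN} => a b /= ha /eqP [e1 e2]; have : (0:R) < a + 1 by rewrite ltr_wpDl // ltr01.
  by rewrite e1 ltxx.
have h2 : v *m cmx Pg = 0.
  by rewrite /Pg cmxZ -scalemxAr cmxM mulmxA h1 mul0mx scaler0.
have h3 : v *m (s0%:M + cmx Ag) = 0.
  by move: vN; rewrite /Mg cmxD addrA mulmxDr h2 addr0.
set y := v *m cmx (invmx Eg).
have vy : v = y *m cmx Eg by rewrite /y -mulmxA -cmxM EU cmx1 mulmx1.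
have h4 : s0 *: (y *m cmx Eg) + y *m cmx Lg = 0.
  by move: h3; rewrite mulmxDr mul_mx_scalar /Ag cmxM mulmxA -vy.
set z := y *m cmx Dg.
have h5 : s0 * (\sum_i (Eg i i)%:C * (y 0 i * (y 0 i)^*))
          + \sum_i (Wg i i)%:C * (z 0 i * (z 0 i)^*) = 0.
  rewrite -quadform // -quadform //.
  have -> : z *m cmx Wg *m (map_mx conjc z)^T = y *m cmx Lg *m (map_mx conjc y)^T.
    rewrite /z /Lg !cmxM cmxT map_mxM conj_cmx trmx_mul !mulmxA //.
  have := congr1 (fun X => (X *m (map_mx conjc y)^T) 0 0) h4.
  rewrite /= mulmxDl -scalemxAl mul0mx => H.
  have : (s0 *: (y *m cmx Eg *m (map_mx conjc y)^T) + y *m cmx Lg *m (map_mx conjc y)^T) 0 0 = 0.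
    by rewrite H mxE.
  by rewrite {1}mxE {1}mxE.
have hz : z = 0.
  apply: quad_eq0 HW _; apply: C_lemma hs0 _ _ h5; exact: quad_ge0.
have [w yw] := Hker hz.
have : v *m cmx (onec k) = w *: (\tr Eg)%:C%:M.
  by rewrite vy yw const_cmx -scalemxAl -!cmxM -scalemxAl -cmxM oner_diag_onec // cmxE map_scalar_mx.
rewrite h1 => /matrixP /(_ 0 0); rewrite !mxE eqxx mulr1n => /esym /eqP.
rewrite mulf_eq0 fmorph_eq0 (negbTE trE_neq0) orbF => /eqP w0.
by move: vNZ; rewrite vy yw w0 scale0r mul0mx eqxx.
Qed.

Lemma A_not_unit : cmx Ag \notin unitmx.
Proof.
apply/negP => hU.
have h : cmx (oner k *m Eg) *m cmx Ag = 0.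
  by rewrite -cmxM /Ag mulmxA -(mulmxA _ Eg) mulmxV ?posdiag_unit // mulmx1 oner_Lg cmx0.
have : cmx (oner k *m Eg) = 0 by rewrite -(mulmxK hU (cmx (oner k *m Eg))) h mul0mx.
move/matrixP/(_ 0 (Ordinal Hk)); rewrite oner_diag // !mxE.
by move/eqP; rewrite fmorph_eq0 gt_eqF // (proj2 HE).
Qed.

Lemma dom_neq0 (s : C) : (s%:M - cmx (- Ag)) \in unitmx -> s != 0.
Proof.
apply: contraL => /eqP ->; rewrite cmxN opprK.
have -> : (0 : C)%:M = 0 :> 'M[C]_k by rewrite raddf0.
by rewrite add0r A_not_unit.
Qed.

Lemma decomp (s : C) : (s%:M + cmx Ag) \in unitmx -> s != 0 ->
  let N := s%:M + cmx Mg in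
  \det N *: invmx (s%:M + cmx Ag) =
    (\det N / s) *: cmx Pg + (1%:M - cmx Pg) *m \adj N.
Proof.
move=> hU hs N; set U := s%:M + cmx Ag; set P := cmx Pg.
have UP : U *m P = s *: P by rewrite /U mulmxDl mul_scalar_mx -cmxM AP cmx0 addr0.
have iUP : invmx U *m P = s^-1 *: P.
  have := mulKmx hU P; rewrite UP -scalemxAr => h.
  by rewrite -{2}h scalerA mulVf // scale1r.
have hN : N = U + P by rewrite /N /U /Mg cmxD addrA.
have PP' : P *m P = P by rewrite /P -cmxM PP.
have NP : N *m P = s *: P + P by rewrite hN mulmxDl UP PP'.
have PN : P *m N = s *: P + P.
  by rewrite /N mulmxDr mul_mx_scalar -cmxM PM.
have comm : (1%:M - P) *m N = N *m (1%:M - P).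
  by rewrite mulmxBl mulmxBr mul1mx mulmx1 NP PN.
have UI : U *m (1%:M - P) = (1%:M - P) *m N.
  by rewrite comm hN [in RHS]mulmxDl [P *m _]mulmxBr mulmx1 PP' subrr addr0.
have key : (1%:M - P) *m \adj N = \det N *: (invmx U *m (1%:M - P)).
  have h := mulKmx hU (1%:M - P); rewrite UI in h.
  by rewrite -{1}h -!mulmxA mul_mx_adj mul_mx_scalar -!scalemxAr.
rewrite key -scalerA -iUP -scalerDr -mulmxDr addrC subrK mulmx1.
by [].
Qed.

Lemma tf_decomp p q (Fg : 'M[R]_(k,p)) (Hg : 'M[R]_(q,k)) (s : C) :
  tf_dom (- Ag) s ->
  let N := s%:M + cmx Mg in
  \det N *: tf (- Ag) (invmx Eg *m Fg) Hg s =
    (\det N / s) *: cmx (Hg *m (Pg *m invmx Eg) *m Fg) +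
    cmx Hg *m ((1%:M - cmx Pg) *m \adj N) *m cmx (invmx Eg *m Fg).
Proof.
move=> hd N; have hs := dom_neq0 hd.
move: hd; rewrite /tf_dom /tf cmxN opprK => hd.
rewrite [LHS]scalemxAl [in LHS]scalemxAr decomp // -/N (mulmxDr (cmx Hg)) (mulmxDl _ _ (cmx (invmx Eg *m Fg))); congr (_ + _).
by rewrite -scalemxAr -scalemxAl !cmxM !mulmxA.
Qed.

End Gen.
End S.

Section Poly.
Variable R : realType.
Local Notation C := R[i].

Definition NP k (B : 'M[C]_k) : 'M[{poly C}]_k := 'X%:M + map_mx polyC B.

Lemma evalNP k (B : 'M[C]_k) s : map_mx (horner_eval s) (NP B) = s%:M + B.
Proof.
apply/matrixP=> i j; rewrite !mxE horner_evalE hornerD hornerC.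
by case: eqVneq => _; rewrite ?mulr1n ?mulr0n ?hornerX ?horner0.
Qed.

Lemma evalC m n (X : 'M[C]_(m,n)) s : map_mx (horner_eval s) (map_mx polyC X) = X.
Proof. by apply/matrixP=> i j; rewrite !mxE horner_evalE hornerC. Qed.

Lemma detNP k (B : 'M[C]_k) s : (\det (NP B)).[s] = \det (s%:M + B).
Proof. by rewrite -horner_evalE -det_map_mx evalNP. Qed.

Definition QP m n k (X : 'M[C]_(m,k)) (B : 'M[C]_k) (Y : 'M[C]_(k,n)) :=
  map_mx polyC X *m \adj (NP B) *m map_mx polyC Y.

Lemma evalQP m n k (X : 'M[C]_(m,k)) (B : 'M[C]_k) (Y : 'M[C]_(k,n)) s :
  map_mx (horner_eval s) (QP X B Y) = X *m \adj (s%:M + B) *m Y.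
Proof. by rewrite /QP !map_mxM map_mx_adj evalNP !evalC. Qed.

Lemma QPE m n k (X : 'M[C]_(m,k)) (B : 'M[C]_k) (Y : 'M[C]_(k,n)) s i j :
  (QP X B Y i j).[s] = (X *m \adj (s%:M + B) *m Y) i j.
Proof. by rewrite -evalQP [RHS]mxE horner_evalE. Qed.

End Poly.

Section Graph.
Variable R : realType.
Local Notation C := R[i].

Lemma const_of_eq k (y : 'rV[C]_k) : (0 < k)%N -> (forall i j, y 0 i = y 0 j) ->
  exists z, y = z *: const_mx 1.
Proof.
move=> Hk H; exists (y 0 (Ordinal Hk)); apply/matrixP=> i j.
by rewrite ord1 !mxE mulr1 (H _ (Ordinal Hk)).
Qed.

Lemma conn_eq n m (e : 'I_m -> 'I_n * 'I_n) (f : 'I_n -> C) :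
  connected_graph e -> (forall l, f (e l).1 = f (e l).2) -> forall i j, f i = f j.
Proof.
move=> Hc Hf i j; have /connectP [p pth ->] := Hc i j.
elim: p i pth => //= a p IH i /andP [hia /IH <-].
case/existsP: hia => l /orP [] /eqP el; have := Hf l; rewrite el //=.
Qed.

Lemma incidence_entry n m (e : 'I_m -> 'I_n * 'I_n) i l :
  incidence R e i l = if i == (e l).1 then 1 else if i == (e l).2 then -1 else 0.
Proof. by rewrite mxE. Qed.

Lemma incidence_row n m (e : 'I_m -> 'I_n * 'I_n) (y : 'rV[C]_n) l :
  (e l).1 != (e l).2 ->
  (y *m cmx (incidence R e)) 0 l = y 0 (e l).1 - y 0 (e l).2.
Proof.
move=> hne; rewrite mxE (bigD1 (e l).1) //= (bigD1 (e l).2) 1?eq_sym //=.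
rewrite big1 ?addr0.
  by rewrite !mxE eqxx eq_sym (negbTE hne) eqxx rmorphN rmorph1 mulr1 mulrN1.
move=> i /andP [h2 h1]; rewrite !mxE (negbTE h1) (negbTE h2) mulr0 //.
Qed.

Lemma incidence_sum n m (e : 'I_m -> 'I_n * 'I_n) :
  simple_graph e -> oner R n *m incidence R e = 0.
Proof.
move=> [hs _]; apply/matrixP=> i l; have hne := hs l.
rewrite !mxE (bigD1 (e l).1) //= (bigD1 (e l).2) 1?eq_sym //=.
rewrite big1 ?addr0.
  by rewrite !mxE eqxx eq_sym (negbTE hne) eqxx !mul1r subrr.
by move=> j /andP [h2 h1]; rewrite !mxE (negbTE h1) (negbTE h2) mulr0.
Qed.

End Graph.

Section Red.
Variable R : realType.
Local Notation C := R[i].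
Variables (n m r : nat) (e : 'I_m -> 'I_n * 'I_n) (c : 'I_n -> 'I_r).
Hypothesis Hsimple : simple_graph e.
Hypothesis Hconn : connected_graph e.
Hypothesis Hc : clustering c.
Local Notation D := (incidence R e).
Local Notation Pi := (char_mx R c).
Local Notation X := (Pi^T *m D).
Local Notation red := (red_cols Pi D).
Local Notation Dh := (red_incidence Pi D).

Lemma Pi1 : Pi *m onec R r = onec R n.
Proof.
apply/matrixP=> i j; rewrite !mxE (bigD1 (c i)) //= big1 ?addr0.
  by rewrite !mxE eqxx mulr1.
by move=> k /negbTE hk; rewrite !mxE eq_sym hk mul0r.
Qed.

Lemma red_mem x : x \in red -> exists l, x = col l X.
Proof.
by rewrite mem_undup => /mapP [l _ ->]; exists l.
Qed.

Lemma red_in l : col l X != 0 -> col l X \in red.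
Proof.
by move=> h; rewrite mem_undup; apply/mapP; exists l => //; rewrite mem_filter h mem_enum.
Qed.

Lemma red_sum : oner R r *m Dh = 0.
Proof.
apply/matrixP=> i k; rewrite ord1 !mxE.
have hk := ltn_ord k.
have [l hl] := red_mem (mem_nth 0 hk).
have : (oner R r *m col l X) 0 0 = 0.
  rewrite colE !mulmxA -onecT -trmx_mul Pi1 onecT incidence_sum //.
  by rewrite !mul0mx !mxE.
rewrite -hl => H; rewrite -[RHS]H mxE; apply: eq_bigr => j _; rewrite !mxE (_ : ord0 = 0) //; exact: val_inj.
Qed.

Lemma red_ker (y : 'rV[C]_r) : y *m cmx Dh = 0 -> y *m cmx X = 0.
Proof.
move=> hy; apply/matrixP=> i l; rewrite ord1 [RHS]mxE.
have [h0|hnz] := eqVneq (col l X) 0.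
  rewrite mxE big1 // => j _.
  have hX : X j l = 0 by move/matrixP: h0 => /(_ j 0); rewrite mxE [RHS]mxE.
  by rewrite cmx_entry hX mulr0.
have hin := red_in hnz.
have hk : (index (col l X) red < size red)%N by rewrite index_mem.
move/matrixP: hy => /(_ 0 (Ordinal hk)); rewrite [RHS]mxE => <-.
by rewrite mxE [RHS]mxE; apply: eq_bigr => j _; rewrite !cmx_entry [Dh _ _]mxE /= nth_index // !mxE.
Qed.

Lemma red_const (y : 'rV[C]_r) : y *m cmx Dh = 0 -> forall a b, y 0 a = y 0 b.
Proof.
move=> /red_ker hy.
set z := y *m cmx (Pi^T).
have hz : forall i, z 0 i = y 0 (c i).
  move=> i; rewrite mxE (bigD1 (c i)) //= big1 ?addr0.
    by rewrite !mxE eqxx mulr1.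
  by move=> j /negbTE hj; rewrite !mxE eq_sym hj mulr0.
have hzD : z *m cmx D = 0 by rewrite /z -mulmxA -cmxM.
have hf : forall l, z 0 (e l).1 = z 0 (e l).2.
  move=> l; apply/eqP; rewrite -subr_eq0 -incidence_row ?(proj1 Hsimple) //.
  by rewrite hzD mxE.
have := @conn_eq R _ _ _ (fun i => z 0 i) Hconn hf.
move=> H a b; have [i <-] := Hc a; have [j <-] := Hc b.
by rewrite -!hz.
Qed.

End Red.

Section Main.
Variable R : realType.
Local Notation C := R[i].

Lemma alg_lem (V : lmodType C) (T1 T2 R2 Q1 Q2 : V) (d1 d2 c s : C) :
  d1 *: T1 = (d1 / s) *: (c *: R2) + Q1 -> d2 *: T2 = (d2 / s) *: R2 + Q2 ->
  (d1 * d2) *: (T1 - c *: T2) = d2 *: Q1 - (c * d1) *: Q2.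
Proof.
move=> h1 h2.
have -> : (d1 * d2) *: (T1 - c *: T2) = d2 *: (d1 *: T1) - (c * d1) *: (d2 *: T2).
  rewrite scalerBr !scalerA; congr (_ *: _ - _ *: _); ring.
rewrite h1 h2 !scalerDr !scalerA.
have -> : d2 * (d1 / s) * c = c * d1 * (d2 / s) by ring.
by rewrite opprD addrACA subrr add0r.
Qed.

Lemma entry_lin q p (A B : 'M[C]_(q,p)) x y i j : (x *: A - y *: B) i j = x * A i j - y * B i j.
Proof. by rewrite !mxE. Qed.

Lemma tf_zero k p q (A : 'M[R]_k) (B : 'M[R]_(k,p)) (Cm : 'M[R]_(q,k)) s :
  k = 0%N -> tf A B Cm s = 0.
Proof.
move=> k0; rewrite /tf (_ : cmx Cm = 0) ?mul0mx //.
by apply/matrixP=> i j; exfalso; case: j; rewrite k0.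
Qed.

Lemma tf_scale k p q (A : 'M[R]_k) (B : 'M[R]_(k,p)) (Cm : 'M[R]_(q,k)) a b s :
  tf A (b *: B) (a *: Cm) s = (a * b)%:C *: tf A B Cm s.
Proof.
by rewrite /tf !cmxZ -scalemxAl -scalemxAl -scalemxAr scalerA rmorphM.
Qed.

End Main.

Close Scope complex_scope.
Unset Implicit Arguments.
Set Strict Implicit.

Theorem lemma1 (R : realType) (n m : nat) (e : 'I_m -> 'I_n * 'I_n)
  (Hsimple : simple_graph e) (Hconn : connected_graph e)
  (W : 'M[R]_m) (HW : posdiag W) (E : 'M[R]_n) (HE : posdiag E)
  (p q : nat) (F : 'M[R]_(n, p)) (H : 'M[R]_(q, n))
  (r : nat) (c : 'I_n -> 'I_r) (Hc : clustering c)
  (alpha beta : R) :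
  let D := incidence R e in
  let Pi := char_mx R c in
  let Dh := red_incidence Pi D in
  forall (Wh : 'M[R]_(size (red_cols Pi D))) (Eh : 'M[R]_r),
    posdiag Wh -> posdiag Eh ->
    alpha * beta = \tr Eh / \tr E ->
    BIBO_stable
      (fun s => Sigma_dom D W E s && Sigma_hat_dom Dh Wh Eh s)
      (fun s => Sigma_tf D W E F H s - Sigma_hat_tf Pi Dh Wh Eh F H alpha beta s).
Proof.
move=> D Pi Dh Wh Eh HWh HEh Hab s0 Hpole.
rewrite ReC (_ : 0 = ((0:R)%:C)%C) // ltcR ltNge; apply/negP => hre; apply: Hpole.
have [n0|npos] := posnP n.
  have r0 : r = 0%N.
    case: (posnP r) => // rpos; have [i _] := Hc (Ordinal rpos).
    by case: i; rewrite n0.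
  move=> i j; exists 0, 1; split; first by rewrite hornerC oner_eq0.
  move=> s _; rewrite /Sigma_tf /Sigma_hat_tf !tf_zero // subrr mxE.
  by rewrite horner0 mul0r.
have rpos : (0 < r)%N := leq_ltn_trans (leq0n _) (ltn_ord (c (Ordinal npos))).
have hsum1 : oner R n *m D = 0 := incidence_sum R Hsimple.
have hsum2 : oner R r *m Dh = 0 := red_sum R c Hsimple.
have hker1 : forall y : 'rV[R[i]]_n, y *m cmx D = 0 -> exists z, y = z *: const_mx 1.
  move=> y hy; apply: const_of_eq => //.
  apply: (@conn_eq R _ _ _ (fun i => y 0 i) Hconn) => l.
  apply/eqP; rewrite -subr_eq0 -incidence_row ?(proj1 Hsimple) //.
  by rewrite hy mxE.
have hker2 : forall y : 'rV[R[i]]_r, y *m cmx Dh = 0 -> exists z, y = z *: const_mx 1.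
  move=> y hy; apply: const_of_eq => // a b; exact: (red_const Hsimple Hconn Hc hy a b).
set M1 := Mg D W E; set M2 := Mg Dh Wh Eh.
set P1 := Pg E; set P2 := Pg Eh.
set c0 : R[i] := ((alpha * beta)%:C)%C.
set Y1 := cmx (invmx E *m F); set Y2 := cmx (invmx Eh *m (Pi^T *m F)).
set X1 := cmx H *m (1%:M - cmx P1); set X2 := cmx (H *m Pi) *m (1%:M - cmx P2).
move=> i j.
exists ((\det (NP (cmx M2))) * QP X1 (cmx M1) Y1 i j
        - c0%:P * \det (NP (cmx M1)) * QP X2 (cmx M2) Y2 i j).
exists (\det (NP (cmx M1)) * \det (NP (cmx M2))).
split.
  rewrite hornerM !detNP mulf_neq0 // -unitfE -unitmxE.
    exact: N_unit HW HE npos hsum1 hker1 _ hre.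
  exact: N_unit HWh HEh rpos hsum2 hker2 _ hre.
move=> s /andP [hd1 hd2].
have hs := dom_neq0 HE npos hsum1 hd1.
have e1 := tf_decomp HE npos hsum1 F H hd1.
have e2 := tf_decomp HEh rpos hsum2 (Pi^T *m F) (H *m Pi) hd2.
rewrite /= -/M1 -/M2 -/P1 -/P2 in e1 e2.
have hres : cmx (H *m (P1 *m invmx E) *m F) =
            c0 *: cmx (H *m Pi *m (P2 *m invmx Eh) *m (Pi^T *m F)).
  rewrite -cmxZ; congr (cmx _).
  rewrite /P1 /P2 !PEinv // -!scalemxAr -!scalemxAl scalerA Hab.
  rewrite mulrAC divff ?mul1r; last exact: trE_neq0 HEh rpos.
  congr (_ *: _).
  have ee : Pi *m (onec R r *m oner R r) *m Pi^T = onec R n *m oner R n.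
    by rewrite mulmxA Pi1 -mulmxA -onecT -trmx_mul Pi1 onecT.
  by rewrite -ee !mulmxA.
rewrite hres in e1.
have := alg_lem e1 e2.
rewrite -/Y1 -/Y2.
move=> hG.
rewrite hornerM !detNP mulrC.
have -> : Sigma_hat_tf Pi Dh Wh Eh F H alpha beta s =
          c0 *: tf (- Ag Dh Wh Eh) (invmx Eh *m (Pi^T *m F)) (H *m Pi) s.
  by rewrite /Sigma_hat_tf tf_scale.
rewrite (_ : forall x (A : 'M[R[i]]_(q,p)), x * A i j = (x *: A) i j); last by move=> x A; rewrite mxE.
rewrite hG entry_lin hornerD hornerN !hornerM hornerC !detNP !QPE.
by rewrite /X1 /X2 !mulmxA.
Qed.
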